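(* Let $\alpha_1,\alpha_2\in\mathbb{C}\setminus\mathbb{R}$ with $\operatorname{Im}\alpha_1/\operatorname{Im}\alpha_2\in\mathbb{Q}$, written as the irreducible fraction $p/q$ ($p\in\mathbb{Z}\setminus\{0\}$, $q\in\mathbb{N}$). For $m\in\mathbb{Z}$ let $\ell_m=\{\lambda\in\mathbb{C}: \operatorname{Im}\lambda=m\operatorname{Im}\alpha_2/q\}$. Then $\mathcal{M}_2\subset\bigcup_{m\in\mathbb{Z}}\ell_m$, and: (i) if $q\operatorname{Re}\alpha_1-p\operatorname{Re}\alpha_2=\tilde p/\tilde q$ is rational (irreducible, $\tilde q\in\mathbb{N}$, with $\tilde p=0,\tilde q=1$ if it vanishes), then $\mathcal{N}_2=\tilde q^{-1}\mathbb{Z}$ and for every $m\in\mathbb{Z}$, $\ell_m\cap\mathcal{M}_2$ is a discrete countable subset of $\ell_m$; (ii) if $q\operatorname{Re}\alpha_1-p\operatorname{Re}\alpha_2\in\mathbb{R}\setminus\mathbb{Q}$, then $\mathcal{N}_2$ is a dense $\mathcal{G}_\delta$ subset of $\mathbb{R}$ and for every $m\in\mathbb{Z}$, $\ell_m\cap\mathcal{M}_2$ is a dense $\mathcal{G}_\delta$ subset of $\ell_m$.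
   Context: $\mathbb{T}^n=\mathbb{R}^n/2\pi\mathbb{Z}^n$; $D_t=-i\partial_t$ etc. A linear differential operator $P$ on $\mathbb{T}^n$ is globally hypoelliptic (GH) if $u\in\mathcal{D}'(\mathbb{T}^n)$ and $Pu\in\mathcal{C}^\infty(\mathbb{T}^n)$ imply $u\in\mathcal{C}^\infty(\mathbb{T}^n)$. Here $L_2=D_t+\alpha_1D_x+\alpha_2D_y$ on $\mathbb{T}^3_{(t,x,y)}$, $\mathcal{M}_2=\{\lambda\in\mathbb{C}: L_2-\lambda\text{ is not GH on }\mathbb{T}^3\}$ and $\mathcal{N}_2=\mathcal{M}_2\cap\mathbb{R}$. *)

(* Defs.v *)
From Stdlib Require Import Reals ZArith.
From Coquelicot Require Import Coquelicot.
Open Scope R_scope.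

(** Frequencies on T^3 = R^3/(2 pi Z)^3: k = (tau, xi, eta) in Z^3. *)
Definition Z3 : Type := (Z * Z * Z)%type.

Definition knorm (k : Z3) : R :=
  let '(a, b, c) := k in 1 + Rabs (IZR a) + Rabs (IZR b) + Rabs (IZR c).

(** Distributions on T^3, in their Fourier picture: families of Fourier
    coefficients of at most polynomial growth. *)
Definition temperate (u : Z3 -> C) : Prop :=
  exists (K : R) (N : nat), forall k, Cmod (u k) <= K * knorm k ^ N.

(** Smooth functions on T^3, in their Fourier picture: rapidly decreasing
    families of Fourier coefficients. *)
Definition rapid (u : Z3 -> C) : Prop :=
  forall N : nat, exists K : R, forall k, Cmod (u k) * knorm k ^ N <= K.

(** Symbol of L_2 - lambda = D_t + a1 D_x + a2 D_y - lambda: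
    on e^{i(t tau + x xi + y eta)} it acts by multiplication by this. *)
Definition symbolL2 (a1 a2 lam : C) (k : Z3) : C :=
  let '(t, x, y) := k in
  (RtoC (IZR t) + a1 * RtoC (IZR x) + a2 * RtoC (IZR y) - lam)%C.

Definition GH_L2 (a1 a2 lam : C) : Prop :=
  forall u : Z3 -> C, temperate u ->
    rapid (fun k => (symbolL2 a1 a2 lam k * u k)%C) -> rapid u.

Definition M2 (a1 a2 : C) (lam : C) : Prop := ~ GH_L2 a1 a2 lam.
Definition N2 (a1 a2 : C) (r : R) : Prop := M2 a1 a2 (RtoC r).

Definition line_l (a2 : C) (q m : Z) (lam : C) : Prop :=
  Im lam = IZR m * Im a2 / IZR q.

Definition R_open (U : R -> Prop) : Prop :=
  forall x, U x -> exists e, 0 < e /\ forall y, Rabs (y - x) < e -> U y.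
Definition R_dense (S : R -> Prop) : Prop :=
  forall x e, 0 < e -> exists y, S y /\ Rabs (y - x) < e.
Definition R_Gdelta (S : R -> Prop) : Prop :=
  exists U : nat -> R -> Prop, (forall n, R_open (U n)) /\
    forall x, S x <-> (forall n, U n x).

Definition C_open (U : C -> Prop) : Prop :=
  forall z, U z -> exists e, 0 < e /\ forall w, Cmod (w - z) < e -> U w.
Definition dense_in (L S : C -> Prop) : Prop :=
  forall z e, L z -> 0 < e -> exists w, L w /\ S w /\ Cmod (w - z) < e.
Definition Gdelta_in (L S : C -> Prop) : Prop :=
  exists U : nat -> C -> Prop, (forall n, C_open (U n)) /\
    forall z, L z -> (S z <-> forall n, U n z).
Definition discrete_in (L S : C -> Prop) : Prop :=
  forall z, L z -> S z -> exists e, 0 < e /\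
    forall w, L w -> S w -> Cmod (w - z) < e -> w = z.
Definition countable_in (L S : C -> Prop) : Prop :=
  exists f : C -> nat, forall z w, L z -> S z -> L w -> S w -> f z = f w -> z = w.

(* Main.v *)
Require Import Defs.
From Stdlib Require Import Reals ZArith Znumtheory Lra Lia ClassicalEpsilon Classical.
From Coquelicot Require Import Coquelicot.
Open Scope R_scope.

Lemma im_le_Cmod (c : C) : Rabs (Im c) <= Cmod c.
Proof.
  destruct c as [a b]. pose proof (re_le_Cmod (b, a)) as H. simpl in *.
  unfold Cmod in *; simpl in *. rewrite Rplus_comm. exact H.
Qed.

Lemma Re_sym a1 a2 lam t x y :
  Re (symbolL2 a1 a2 lam (t, x, y)) = IZR t + Re a1 * IZR x + Re a2 * IZR y - Re lam.
Proof. destruct a1, a2, lam; unfold symbolL2; simpl; ring. Qed.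

Lemma Im_sym a1 a2 lam t x y :
  Im (symbolL2 a1 a2 lam (t, x, y)) = Im a1 * IZR x + Im a2 * IZR y - Im lam.
Proof. destruct a1, a2, lam; unfold symbolL2; simpl; ring. Qed.

Lemma sym_shift a1 a2 lam w k :
  symbolL2 a1 a2 w k = (symbolL2 a1 a2 lam k - (w - lam))%C.
Proof.
  destruct k as [[t x] y]. destruct a1, a2, lam, w; unfold symbolL2, Cminus, Cplus, Copp, Cmult; simpl.
  f_equal; ring.
Qed.

Lemma knorm_ge1 k : 1 <= knorm k.
Proof.
  destruct k as [[a b] c]; unfold knorm.
  pose proof (Rabs_pos (IZR a)); pose proof (Rabs_pos (IZR b)); pose proof (Rabs_pos (IZR c)); lra.
Qed.

Lemma knorm_gt_x t x y : Rabs (IZR x) < knorm (t, x, y).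
Proof.
  unfold knorm.
  pose proof (Rabs_pos (IZR t)); pose proof (Rabs_pos (IZR y)); lra.
Qed.

Lemma C_eq (z w : C) : Re z = Re w -> Im z = Im w -> z = w.
Proof. destruct z, w; simpl; intros; subst; reflexivity. Qed.

Lemma Cmod_zero_of (z : C) : Re z = 0 -> Im z = 0 -> Cmod z = 0.
Proof.
  intros. replace z with (RtoC 0) by (apply C_eq; simpl; auto). rewrite Cmod_R. apply Rabs_R0.
Qed.

Lemma floorZ (y : R) : exists N : Z, IZR N <= y < IZR N + 1.
Proof.
  destruct (archimed y) as [H1 H2]. exists (up y - 1)%Z. rewrite minus_IZR. simpl. lra.
Qed.

Lemma dist_nonint d : (forall n : Z, d <> IZR n) -> exists delta, 0 < delta /\ forall n : Z, delta <= Rabs (IZR n - d).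
Proof.
  intros H. destruct (floorZ d) as [F [H1 H2]].
  assert (IZR F < d) by (destruct H1; auto; exfalso; apply (H F); auto).
  exists (Rmin (d - IZR F) (IZR F + 1 - d)). split.
  - apply Rmin_pos; lra.
  - intros n. destruct (Z.le_gt_cases n F) as [Hn|Hn].
    + apply IZR_le in Hn. rewrite Rabs_left1 by lra. pose proof (Rmin_l (d - IZR F) (IZR F + 1 - d)). lra.
    + assert (IZR (F + 1) <= IZR n) by (apply IZR_le; lia). rewrite plus_IZR in H3.
      rewrite Rabs_right by lra. pose proof (Rmin_r (d - IZR F) (IZR F + 1 - d)). lra.
Qed.

Lemma IZR_abs_ge1 (w : Z) : w <> 0%Z -> 1 <= Rabs (IZR w).
Proof.
  intros H. rewrite <- abs_IZR. apply IZR_le. lia.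
Qed.

Lemma IZR_abs_lt1 (w : Z) : Rabs (IZR w) < 1 -> w = 0%Z.
Proof.
  intros H. destruct (Z.eq_dec w 0); auto. pose proof (IZR_abs_ge1 w n). lra.
Qed.

Section GH.
Variables a1 a2 : C.

Lemma GH_suff lam C0 N M : 0 < C0 ->
  (forall k, M < knorm k -> C0 <= Cmod (symbolL2 a1 a2 lam k) * knorm k ^ N) ->
  GH_L2 a1 a2 lam.
Proof.
  intros HC H u [K [N0 Hu]] Hr N'.
  destruct (Hr (N + N')%nat) as [K1 HK1].
  exists (Rmax (K1 / C0) (Rabs K * Rabs M ^ N0 * Rabs M ^ N')).
  intros k. pose proof (knorm_ge1 k) as Hk1.
  destruct (Rlt_le_dec M (knorm k)) as [HM|HM].
  - apply Rle_trans with (K1 / C0); [|apply Rmax_l].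
    specialize (H k HM). specialize (HK1 k). rewrite Cmod_mult, pow_add in HK1.
    apply Rmult_le_reg_r with C0; auto. replace (K1 / C0 * C0) with K1 by (field; lra).
    apply Rle_trans with (Cmod (u k) * knorm k ^ N' * (Cmod (symbolL2 a1 a2 lam k) * knorm k ^ N)).
    + apply Rmult_le_compat_l; auto. apply Rmult_le_pos. apply Cmod_ge_0. apply pow_le; lra.
    + eapply Rle_trans; [|exact HK1]. right; ring.
  - apply Rle_trans with (Rabs K * Rabs M ^ N0 * Rabs M ^ N'); [|apply Rmax_r].
    specialize (Hu k).
    assert (HP : forall n, knorm k ^ n <= Rabs M ^ n).
    { intros n. apply pow_incr. split. lra. apply Rle_trans with M; auto. apply Rle_abs. }
    apply Rmult_le_compat.
    + apply Cmod_ge_0.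
    + apply pow_le; lra.
    + eapply Rle_trans; [exact Hu|]. eapply Rle_trans; [apply Rmult_le_compat_r; [apply pow_le; lra| apply Rle_abs]|].
      apply Rmult_le_compat_l; [apply Rabs_pos|apply HP].
    + apply HP.
Qed.

Lemma le_sum (f : nat -> R) (n i : nat) : (forall j, 0 <= f j) -> (i <= n)%nat -> f i <= sum_f_R0 f n.
Proof.
  intros Hf Hi. induction n.
  - assert (i = 0%nat) by lia. subst. simpl. lra.
  - destruct (Nat.eq_dec i (S n)).
    + subst. simpl. pose proof (cond_pos_sum f n Hf). lra.
    + simpl. pose proof (Hf (S n)). assert (i <= n)%nat by lia. specialize (IHn H0). lra.
Qed.

Lemma nat_unbounded (K : R) : exists n : nat, K < INR n.
Proof.
  destruct (archimed (Rabs K)) as [H1 _].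
  exists (Z.to_nat (up (Rabs K))). rewrite INR_IZR_INZ, Z2Nat.id.
  - pose proof (Rle_abs K); lra.
  - apply le_IZR. pose proof (Rabs_pos K). lra.
Qed.

Lemma notGH_suff lam :
  (forall (N : nat) (M : R), exists k, M < knorm k /\ Cmod (symbolL2 a1 a2 lam k) * knorm k ^ N <= 1) ->
  ~ GH_L2 a1 a2 lam.
Proof.
  intros H HGH.
  pose (g := fun n : nat => proj1_sig (constructive_indefinite_description _ (H n (INR n)))).
  assert (Hg : forall n, INR n < knorm (g n) /\ Cmod (symbolL2 a1 a2 lam (g n)) * knorm (g n) ^ n <= 1).
  { intros n. unfold g. destruct (constructive_indefinite_description _ _) as [k Hk]. exact Hk. }
  pose (u := fun k => if excluded_middle_informative (exists n, k = g n) then RtoC 1 else RtoC 0).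
  assert (Hr : rapid u).
  { apply HGH.
    - exists 1, 0%nat. intros k. unfold u. destruct excluded_middle_informative.
      + rewrite Cmod_1. simpl; lra.
      + rewrite Cmod_0. simpl; lra.
    - intros N. exists (1 + sum_f_R0 (fun i => Cmod (symbolL2 a1 a2 lam (g i)) * knorm (g i) ^ N) N).
      assert (Hpos : 0 <= sum_f_R0 (fun i => Cmod (symbolL2 a1 a2 lam (g i)) * knorm (g i) ^ N) N).
      { apply cond_pos_sum. intros; apply Rmult_le_pos. apply Cmod_ge_0. apply pow_le. pose proof (knorm_ge1 (g n)); lra. }
      intros k. unfold u. destruct excluded_middle_informative as [[n Hn]|Hn].
      + rewrite Cmod_mult, Cmod_1, Rmult_1_r. subst k.
        destruct (le_lt_dec N n) as [HNn|HNn].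
        * destruct (Hg n) as [_ H2]. eapply Rle_trans; [|apply Rle_trans with 1; [exact H2|lra]].
          apply Rmult_le_compat_l. apply Cmod_ge_0. apply Rle_pow; auto. apply knorm_ge1.
        * pose proof (le_sum (fun i => Cmod (symbolL2 a1 a2 lam (g i)) * knorm (g i) ^ N) N n) as Hs.
          simpl in Hs. assert (n <= N)%nat by lia.
          assert (HH : Cmod (symbolL2 a1 a2 lam (g n)) * knorm (g n) ^ N <= sum_f_R0 (fun i => Cmod (symbolL2 a1 a2 lam (g i)) * knorm (g i) ^ N) N).
          { apply Hs; auto. intros; apply Rmult_le_pos. apply Cmod_ge_0. apply pow_le. pose proof (knorm_ge1 (g j)); lra. }
          lra.
      + rewrite Cmod_mult, Cmod_0, Rmult_0_r, Rmult_0_l. lra. }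
  destruct (Hr 1%nat) as [K HK].
  destruct (nat_unbounded K) as [n Hn].
  specialize (HK (g n)). unfold u in HK. destruct excluded_middle_informative as [_|Hc].
  - rewrite Cmod_1 in HK. destruct (Hg n) as [H1 _]. simpl in HK. lra.
  - apply Hc. exists n; auto.
Qed.

Definition U (n : nat) (lam : C) : Prop :=
  exists k, INR n < knorm k /\ Cmod (symbolL2 a1 a2 lam k) * knorm k ^ n < 1.

Lemma M2_iff lam : M2 a1 a2 lam <-> forall n, U n lam.
Proof.
  split.
  - intros HM n. apply NNPP. intros HU. apply HM.
    apply (GH_suff lam 1 n (INR n)); [lra|].
    intros k Hk. apply Rnot_lt_le. intros Hc. apply HU. exists k; auto.
  - intros HU. apply notGH_suff. intros N M.
    destruct (nat_unbounded M) as [n0 Hn0].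
    destruct (HU (n0 + N)%nat) as [k [H1 H2]]. exists k. split.
    + rewrite plus_INR in H1. pose proof (pos_INR N). lra.
    + eapply Rle_trans; [|left; exact H2]. apply Rmult_le_compat_l. apply Cmod_ge_0.
      apply Rle_pow. apply knorm_ge1. lia.
Qed.

Lemma U_open n : C_open (U n).
Proof.
  intros lam [k [H1 H2]].
  set (P := knorm k ^ n) in *. assert (HP : 0 < P) by (apply pow_lt; pose proof (knorm_ge1 k); lra).
  exists ((1 - Cmod (symbolL2 a1 a2 lam k) * P) / P). split.
  - apply Rdiv_lt_0_compat; lra.
  - intros w Hw. exists k. split; auto. rewrite (sym_shift a1 a2 lam w k).
    unfold Cminus at 1. pose proof (Cmod_triangle (symbolL2 a1 a2 lam k) (- (w - lam))%C) as T.
    rewrite Cmod_opp in T. fold P.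
    apply Rmult_lt_compat_r with (r := P) in Hw; auto. replace ((1 - Cmod (symbolL2 a1 a2 lam k) * P) / P * P) with (1 - Cmod (symbolL2 a1 a2 lam k) * P) in Hw by (field; lra).
    apply Rle_lt_trans with ((Cmod (symbolL2 a1 a2 lam k) + Cmod (w - lam)) * P).
    + apply Rmult_le_compat_r; lra.
    + lra.
Qed.

End GH.

Definition encZ (n : Z) : nat := (Z.to_nat (2 * n) + Z.to_nat (- 2 * n - 1))%nat.
Lemma encZ_inj a b : encZ a = encZ b -> a = b.
Proof. unfold encZ. lia. Qed.

Lemma up_IZR (n : Z) : up (IZR n) = (n + 1)%Z.
Proof. symmetry. apply tech_up; rewrite plus_IZR; simpl; lra. Qed.

Lemma Re_minus (w z : C) : Re (w - z)%C = Re w - Re z.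
Proof. destruct w, z; simpl; ring. Qed.

Lemma disc_count (L S : C -> Prop) (A B c : R) : 0 < A -> (forall z, L z -> Im z = c) ->
  (forall z, L z -> S z -> exists n : Z, A * Re z - B = IZR n) -> discrete_in L S /\ countable_in L S.
Proof.
  intros HA HL HS. split.
  - intros z Lz Sz. exists (/ A). split. apply Rinv_0_lt_compat; auto.
    intros w Lw Sw Hc. destruct (HS z Lz Sz) as [nz Hz]. destruct (HS w Lw Sw) as [nw Hw].
    pose proof (re_le_Cmod (w - z)%C) as H. rewrite Re_minus in H.
    assert (Hn : Rabs (IZR (nw - nz)) < 1).
    { rewrite minus_IZR, <- Hz, <- Hw. replace (A * Re w - B - (A * Re z - B)) with (A * (Re w - Re z)) by ring.
      rewrite Rabs_mult, Rabs_right by lra.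
      apply Rmult_lt_compat_l with (r := A) in Hc; auto. rewrite Rinv_r in Hc by lra.
      apply Rle_lt_trans with (A * Cmod (w - z)); auto. apply Rmult_le_compat_l; lra. }
    apply IZR_abs_lt1 in Hn. assert (nw = nz) by lia. subst nw.
    apply C_eq. apply Rmult_eq_reg_l with A; lra. rewrite (HL w Lw), (HL z Lz); auto.
  - exists (fun z => encZ (up (A * Re z - B))).
    intros z w Lz Sz Lw Sw Hf. apply encZ_inj in Hf.
    destruct (HS z Lz Sz) as [nz Hz]. destruct (HS w Lw Sw) as [nw Hw].
    rewrite Hz, Hw, !up_IZR in Hf. assert (nw = nz) by lia. subst nw.
    apply C_eq. apply Rmult_eq_reg_l with A; lra. rewrite (HL w Lw), (HL z Lz); auto.
Qed.

Definition gz (th : R) (t j : Z) : R := IZR t + IZR j * th.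

Lemma gz_lin th t j t0 j0 N : gz th t j - IZR N * gz th t0 j0 = gz th (t - N * t0) (j - N * j0).
Proof. unfold gz. rewrite !minus_IZR, !mult_IZR. ring. Qed.

Lemma small_elem th : (forall a b : Z, b <> 0%Z -> th <> IZR a / IZR b) ->
  forall eps, 0 < eps -> exists t j, 0 < gz th t j < eps.
Proof.
  intros Hirr eps Heps. apply NNPP; intro H.
  assert (Hsep : forall t j, 0 < gz th t j -> eps <= gz th t j).
  { intros t j Hp. apply Rnot_lt_le. intro Hl. apply H. exists t, j; split; auto. }
  set (E := fun y => exists t j, 0 < gz th t j /\ y = - gz th t j).
  assert (HB : bound E). { exists 0. intros y [t [j [H1 H2]]]. lra. }
  assert (HE : exists y, E y). { exists (-1). exists 1%Z, 0%Z. unfold gz; simpl; split; lra. }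
  destruct (completeness E HB HE) as [s [Hub Hlub]].
  set (a := - s).
  assert (F1 : forall t j, 0 < gz th t j -> a <= gz th t j).
  { intros t j Hp. assert (E (- gz th t j)) by (exists t, j; auto). specialize (Hub _ H0). unfold a; lra. }
  assert (F2 : forall eta, 0 < eta -> exists t j, 0 < gz th t j /\ gz th t j < a + eta).
  { intros eta Heta. apply NNPP; intro Hn.
    assert (is_upper_bound E (s - eta)).
    { intros y [t [j [H1 H2]]]. apply Rnot_lt_le. intro Hc. apply Hn. exists t, j. split; auto. unfold a; lra. }
    specialize (Hlub _ H0). lra. }
  assert (Ha : eps <= a).
  { assert (is_upper_bound E (- eps)). { intros y [t [j [H1 H2]]]. specialize (Hsep t j H1). lra. }
    specialize (Hlub _ H0). unfold a; lra. }
  assert (Hin : exists t0 j0, gz th t0 j0 = a).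
  { apply NNPP; intro Hn.
    destruct (F2 a) as [t1 [j1 [H1 H2]]]; [lra|].
    assert (a < gz th t1 j1). { destruct (F1 t1 j1 H1); auto. exfalso; apply Hn; exists t1, j1; auto. }
    destruct (F2 (gz th t1 j1 - a)) as [t2 [j2 [H3 H4]]]; [lra|].
    assert (a < gz th t2 j2). { destruct (F1 t2 j2 H3); auto. exfalso; apply Hn; exists t2, j2; auto. }
    pose proof (gz_lin th t1 j1 t2 j2 1) as L. rewrite !Z.mul_1_l in L. simpl IZR in L.
    assert (0 < gz th (t1 - t2) (j1 - j2)) by lra.
    specialize (F1 _ _ H6). lra. }
  destruct Hin as [t0 [j0 Ht0]].
  assert (Hmul : forall t j, exists N : Z, gz th t j = IZR N * a).
  { intros t j. destruct (floorZ (gz th t j / a)) as [N [HN1 HN2]]. exists N.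
    pose proof (gz_lin th t j t0 j0 N) as L. rewrite Ht0 in L.
    apply Rmult_le_compat_r with (r := a) in HN1; [|lra].
    apply Rmult_lt_compat_r with (r := a) in HN2; [|lra].
    replace (gz th t j / a * a) with (gz th t j) in HN1, HN2 by (field; lra).
    destruct (Rle_lt_or_eq_dec _ _ HN1) as [Hl|He]; [|lra].
    assert (0 < gz th (t - N * t0) (j - N * j0)) by lra.
    specialize (F1 _ _ H0). lra. }
  destruct (Hmul 1%Z 0%Z) as [N1 H1]. destruct (Hmul 0%Z 1%Z) as [N2 H2].
  unfold gz in H1, H2. simpl IZR in H1, H2.
  assert (HN1 : N1 <> 0%Z). { intro Hz. subst. simpl in H1. lra. }
  apply (Hirr N2 N1 HN1).
  assert (IZR N1 <> 0) by (apply not_0_IZR; auto).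
  assert (Ha1 : a = / IZR N1).
  { apply (Rmult_eq_reg_l (IZR N1)); auto. rewrite Rinv_r by auto. lra. }
  replace th with (IZR N2 * a) by lra. rewrite Ha1. field. auto.
Qed.

Lemma gz_mul th N t j : gz th (N * t) (N * j) = IZR N * gz th t j.
Proof. unfold gz. rewrite !mult_IZR. ring. Qed.

Lemma irr_dense th : (forall a b : Z, b <> 0%Z -> th <> IZR a / IZR b) ->
  forall X eps M, 0 < eps -> exists t j, M < Rabs (IZR j) /\ Rabs (gz th t j - X) < eps.
Proof.
  intros Hirr X eps M Heps.
  set (K := up (Rmax M 0)). destruct (archimed (Rmax M 0)) as [HK _]. fold K in HK.
  pose proof (Rmax_l M 0). pose proof (Rmax_r M 0).
  assert (HK0 : (1 <= K)%Z). { assert (0 < K)%Z by (apply lt_IZR; simpl; lra). lia. }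
  assert (HK1 : 1 <= IZR K) by (apply IZR_le in HK0; auto).
  destruct (small_elem th Hirr (Rmin (eps / (IZR K + 2)) 1)) as [t' [j' [Hg1 Hg2]]].
  { apply Rmin_pos; [apply Rdiv_lt_0_compat|]; lra. }
  pose proof (Rmin_l (eps / (IZR K + 2)) 1). pose proof (Rmin_r (eps / (IZR K + 2)) 1).
  set (g := gz th t' j') in *.
  assert (Hj' : j' <> 0%Z).
  { intro Hz. subst j'. unfold g, gz in Hg1, Hg2. rewrite Rmult_0_l, Rplus_0_r in Hg1, Hg2.
    assert (Ht1 : (1 <= t')%Z) by (assert (0 < t')%Z by (apply lt_IZR; auto); lia). apply IZR_le in Ht1. simpl in Ht1. lra. }
  pose proof (IZR_abs_ge1 _ Hj') as Hj1.
  assert (HgK : (IZR K + 1) * g < eps).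
  { apply Rlt_le_trans with ((IZR K + 2) * (eps / (IZR K + 2))).
    - apply Rle_lt_trans with ((IZR K + 2) * g). apply Rmult_le_compat_r; lra.
      apply Rmult_lt_compat_l; lra.
    - right. field. lra. }
  destruct (floorZ (X / g)) as [N0 [HN1 HN2]].
  apply Rmult_le_compat_r with (r := g) in HN1; [|lra].
  apply Rmult_lt_compat_r with (r := g) in HN2; [|lra].
  replace (X / g * g) with X in HN1, HN2 by (field; lra).
  assert (Hfin : forall N : Z, (K <= Z.abs N)%Z -> Rabs (IZR N * g - IZR N0 * g) <= IZR K * g ->
            exists t j, M < Rabs (IZR j) /\ Rabs (gz th t j - X) < eps).
  { intros N HN Hd. exists (N * t')%Z, (N * j')%Z. split.
    - rewrite mult_IZR, Rabs_mult. apply IZR_le in HN. rewrite abs_IZR in HN.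
      apply Rlt_le_trans with (IZR K * 1). lra. apply Rmult_le_compat; lra.
    - rewrite gz_mul. fold g.
      replace (IZR N * g - X) with ((IZR N * g - IZR N0 * g) + (IZR N0 * g - X)) by ring.
      eapply Rle_lt_trans; [apply Rabs_triang|].
      assert (Rabs (IZR N0 * g - X) <= g) by (rewrite Rabs_left1; lra). lra. }
  destruct (Z_le_dec 0 N0) as [Hs|Hs].
  - apply (Hfin (N0 + K)%Z). lia. rewrite plus_IZR.
    replace ((IZR N0 + IZR K) * g - IZR N0 * g) with (IZR K * g) by ring.
    rewrite Rabs_right. lra. apply Rle_ge, Rmult_le_pos; lra.
  - apply (Hfin (N0 - K)%Z). lia. rewrite minus_IZR.
    replace ((IZR N0 - IZR K) * g - IZR N0 * g) with (- (IZR K * g)) by ring.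
    rewrite Rabs_Ropp, Rabs_right. lra. apply Rle_ge, Rmult_le_pos; lra.
Qed.

Lemma baire_step (W : nat -> R -> Prop) : (forall n, R_open (W n)) -> (forall n, R_dense (W n)) ->
  forall n (cr : R * R), exists cr' : R * R, 0 < snd cr ->
    0 < snd cr' /\ snd cr' <= / (INR n + 1) /\
    forall y, Rabs (y - fst cr') <= snd cr' -> Rabs (y - fst cr) < snd cr /\ W n y.
Proof.
  intros Ho Hd n [c r]. simpl.
  destruct (Rlt_le_dec 0 r) as [Hr|Hr]; [|exists (0, 0); intros; lra].
  destruct (Hd n c (r / 2)) as [y0 [Hy0 Hy0c]]; [lra|].
  destruct (Ho n y0 Hy0) as [d [Hd0 Hd1]].
  pose proof (pos_INR n) as Hn.
  assert (Hi : 0 < / (INR n + 1)) by (apply Rinv_0_lt_compat; lra).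
  set (r' := Rmin (d / 2) (Rmin (r / 4) (/ (INR n + 1)))).
  pose proof (Rmin_l (d / 2) (Rmin (r / 4) (/ (INR n + 1)))).
  pose proof (Rmin_r (d / 2) (Rmin (r / 4) (/ (INR n + 1)))).
  pose proof (Rmin_l (r / 4) (/ (INR n + 1))). pose proof (Rmin_r (r / 4) (/ (INR n + 1))).
  fold r' in H, H0.
  exists (y0, r'). simpl. intros _. split; [|split].
  - unfold r'. repeat apply Rmin_pos; lra.
  - lra.
  - intros y Hy. split.
    + replace (y - c) with ((y - y0) + (y0 - c)) by ring.
      eapply Rle_lt_trans; [apply Rabs_triang|]. lra.
    + apply Hd1. lra.
Qed.

Lemma baire (W : nat -> R -> Prop) : (forall n, R_open (W n)) -> (forall n, R_dense (W n)) ->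
  R_dense (fun x => forall n, W n x).
Proof.
  intros Ho Hd x e He.
  pose (st := fun n cr => proj1_sig (constructive_indefinite_description _ (baire_step W Ho Hd n cr))).
  assert (Hst : forall n cr, 0 < snd cr -> 0 < snd (st n cr) /\ snd (st n cr) <= / (INR n + 1) /\
    forall y, Rabs (y - fst (st n cr)) <= snd (st n cr) -> Rabs (y - fst cr) < snd cr /\ W n y).
  { intros n cr. unfold st. destruct constructive_indefinite_description as [cr' H]. exact H. }
  pose (b := fix b (n : nat) : R * R := match n with O => (x, e / 2) | S k => st k (b k) end).
  assert (Hpos : forall n, 0 < snd (b n)).
  { induction n. simpl; lra. simpl. apply Hst; auto. }
  assert (Hnest1 : forall n y, Rabs (y - fst (b (S n))) <= snd (b (S n)) -> Rabs (y - fst (b n)) <= snd (b n) /\ W n y).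
  { intros n y Hy. simpl in Hy. destruct (Hst n (b n) (Hpos n)) as [_ [_ H3]]. destruct (H3 y Hy). split; auto. lra. }
  assert (Hnest : forall n m, (n <= m)%nat -> forall y, Rabs (y - fst (b m)) <= snd (b m) -> Rabs (y - fst (b n)) <= snd (b n)).
  { intros n m Hnm. induction Hnm; auto. intros y Hy. apply IHHnm. apply Hnest1; auto. }
  assert (Hrad : forall n, snd (b (S n)) <= / (INR n + 1)).
  { intros n. simpl. apply Hst; auto. }
  assert (Hc : forall n m, (n <= m)%nat -> Rabs (fst (b m) - fst (b n)) <= snd (b n)).
  { intros n m Hnm. apply (Hnest n m Hnm). unfold Rminus. rewrite Rplus_opp_r, Rabs_R0. left; apply Hpos. }
  assert (Hcau : Cauchy_crit (fun n => fst (b n))).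
  { intros eps Heps. destruct (nat_unbounded (2 / eps)) as [N0 HN0].
    exists (S N0). intros n m Hn Hm. unfold Rdist.
    pose proof (Hc _ _ Hn). pose proof (Hc _ _ Hm). pose proof (Hrad N0).
    pose proof (pos_INR N0).
    assert (2 / (INR N0 + 1) < eps).
    { apply Rmult_lt_reg_r with (INR N0 + 1); [lra|]. unfold Rdiv. rewrite Rmult_assoc, Rinv_l by lra.
      apply Rmult_lt_compat_l with (r := eps) in HN0; auto. unfold Rdiv in HN0.
      rewrite <- Rmult_assoc, (Rmult_comm eps 2), Rmult_assoc, Rinv_r in HN0 by lra. lra. }
    replace (fst (b n) - fst (b m)) with ((fst (b n) - fst (b (S N0))) - (fst (b m) - fst (b (S N0)))) by ring.
    eapply Rle_lt_trans; [apply Rabs_triang|]. rewrite Rabs_Ropp.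
    unfold Rdiv in H3. lra. }
  destruct (Rcomplete.R_complete _ Hcau) as [l Hl].
  assert (Hlim : forall n, Rabs (l - fst (b n)) <= snd (b n)).
  { intros n. apply Rnot_lt_le. intro Hlt.
    destruct (Hl (Rabs (l - fst (b n)) - snd (b n))) as [N HN]; [lra|].
    specialize (HN (Nat.max N n) (Nat.le_max_l _ _)). unfold Rdist in HN.
    pose proof (Hc n (Nat.max N n) (Nat.le_max_r _ _)).
    set (A := fst (b (Nat.max N n))) in *. set (B := fst (b n)) in *.
    pose proof (Rabs_triang (A - B) (l - A)).
    replace (A - B + (l - A)) with (l - B) in H0 by ring.
    rewrite <- Rabs_Ropp in HN. replace (- (A - l)) with (l - A) in HN by ring. lra. }
  exists l. split.
  - intros n. apply (Hnest1 n l (Hlim (S n))).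
  - specialize (Hlim 0%nat). simpl in Hlim. lra.
Qed.

Section Main.
Variables (a1 a2 : C) (p q : Z).
Hypotheses (Ha1 : Im a1 <> 0) (Ha2 : Im a2 <> 0) (Hp : p <> 0%Z) (Hq : (0 < q)%Z)
  (Hg : Z.gcd p q = 1%Z) (Hr : Im a1 / Im a2 = IZR p / IZR q).

Lemma qpos : 0 < IZR q.
Proof. apply IZR_lt; auto. Qed.

Lemma im_a1 : Im a1 = Im a2 * IZR p / IZR q.
Proof.
  pose proof qpos. replace (Im a1) with (Im a1 / Im a2 * Im a2) by (field; auto).
  rewrite Hr. field. lra.
Qed.

Lemma absq_pos : 0 < Rabs (Im a2) / IZR q.
Proof. pose proof qpos. apply Rdiv_lt_0_compat; auto. apply Rabs_pos_lt; auto. Qed.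

Lemma Im_line_form lam t x y m :
  Im (symbolL2 a1 a2 lam (t, x, y)) = Im a2 / IZR q * (IZR (p * x + q * y - m)) + (IZR m * Im a2 / IZR q - Im lam).
Proof.
  pose proof qpos. rewrite Im_sym, minus_IZR, plus_IZR, !mult_IZR, im_a1. field. lra.
Qed.

Lemma Im_big lam t x y m : line_l a2 q m lam -> (p * x + q * y - m)%Z <> 0%Z ->
  Rabs (Im a2) / IZR q <= Cmod (symbolL2 a1 a2 lam (t, x, y)).
Proof.
  intros Hl Hw. pose proof qpos. eapply Rle_trans; [|apply im_le_Cmod].
  rewrite (Im_line_form lam t x y m). unfold line_l in Hl. rewrite Hl.
  replace (IZR m * Im a2 / IZR q - IZR m * Im a2 / IZR q) with 0 by ring. rewrite Rplus_0_r.
  rewrite Rabs_mult. unfold Rdiv. rewrite Rabs_mult, (Rabs_inv (IZR q)), (Rabs_right (IZR q)) by lra.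
  pose proof (IZR_abs_ge1 _ Hw). pose proof (Rabs_pos (Im a2)). pose proof (Rinv_0_lt_compat _ H).
  rewrite <- (Rmult_1_r (Rabs (Im a2) * / IZR q)) at 1. apply Rmult_le_compat_l; auto.
  apply Rmult_le_pos; lra.
Qed.

Lemma part1 lam : M2 a1 a2 lam -> exists m, line_l a2 q m lam.
Proof.
  intros HM. apply NNPP; intro Hn. apply HM. pose proof qpos.
  set (d := Im lam * IZR q / Im a2).
  assert (Hd : forall n : Z, d <> IZR n).
  { intros n E. apply Hn. exists n. unfold line_l. unfold d in E.
    replace (Im lam) with (Im lam * IZR q / Im a2 * Im a2 / IZR q) by (field; split; lra || auto).
    rewrite E. reflexivity. }
  destruct (dist_nonint d Hd) as [delta [Hdp Hdl]].
  apply (GH_suff a1 a2 lam (Rabs (Im a2) / IZR q * delta) 0 0).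
  - apply Rmult_lt_0_compat; auto. apply absq_pos.
  - intros [[t x] y] _. simpl pow. rewrite Rmult_1_r.
    eapply Rle_trans; [|apply im_le_Cmod].
    replace (Im (symbolL2 a1 a2 lam (t, x, y))) with (Im a2 / IZR q * (IZR (p * x + q * y) - d)).
    2:{ rewrite Im_sym, plus_IZR, !mult_IZR, im_a1. unfold d. field. split; lra || auto. }
    rewrite Rabs_mult. unfold Rdiv at 2. rewrite Rabs_mult, (Rabs_inv (IZR q)), (Rabs_right (IZR q)) by lra.
    apply Rmult_le_compat_l. left; apply absq_pos. apply Hdl.
Qed.

Lemma N2_rat_back pt qt n : (0 < qt)%Z -> Z.gcd pt qt = 1%Z ->
  IZR q * Re a1 - IZR p * Re a2 = IZR pt / IZR qt -> N2 a1 a2 (IZR n / IZR qt).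
Proof.
  intros Hqt Hgt Hth. assert (Hqt' : 0 < IZR qt) by (apply IZR_lt; auto). pose proof qpos.
  apply notGH_suff. intros N M.
  destruct (Z.gcd_bezout _ _ _ Hgt) as [u [v Huv]].
  set (s := up (Rabs M + Rabs (IZR (n * u)))).
  destruct (archimed (Rabs M + Rabs (IZR (n * u)))) as [Hs1 _]. fold s in Hs1.
  assert (Hs0 : (0 <= s)%Z) by (apply le_IZR; pose proof (Rabs_pos M); pose proof (Rabs_pos (IZR (n*u))); lra).
  set (j := (n * u + qt * s)%Z). set (t := (n * v - pt * s)%Z).
  assert (Hj : (n * u + s <= j)%Z) by (unfold j; nia).
  assert (Hqj : (j <= q * j)%Z).
  { assert (0 <= j)%Z. { apply le_IZR. apply IZR_le in Hj. rewrite plus_IZR in Hj.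
      pose proof (Rabs_pos M). pose proof (Rle_abs (- IZR (n*u))). rewrite Rabs_Ropp in H1. simpl; lra. }
    nia. }
  assert (Htj : (qt * t + pt * j = n)%Z) by (unfold t, j; transitivity (n * (u * pt + v * qt))%Z; [ring | rewrite Huv; ring]).
  exists (t, (q * j)%Z, (- p * j)%Z). split.
  - eapply Rle_lt_trans; [|apply knorm_gt_x]. eapply Rle_trans; [|apply Rle_abs].
    apply IZR_le in Hqj. apply IZR_le in Hj. rewrite plus_IZR in Hj.
    pose proof (Rle_abs M). pose proof (Rle_abs (- IZR (n*u))). rewrite Rabs_Ropp in H1. lra.
  - rewrite Cmod_zero_of. rewrite Rmult_0_l; lra.
    + rewrite Re_sym. simpl Re. apply (f_equal IZR) in Htj. rewrite plus_IZR, !mult_IZR in Htj.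
      rewrite !mult_IZR, opp_IZR.
      apply Rmult_eq_reg_l with (IZR qt); [|lra].
      replace (IZR qt * (IZR t + Re a1 * (IZR q * IZR j) + Re a2 * (- IZR p * IZR j) - IZR n / IZR qt))
        with (IZR qt * IZR t + IZR j * (IZR qt * (IZR q * Re a1 - IZR p * Re a2)) - IZR n) by (field; lra).
      rewrite Hth. replace (IZR qt * (IZR pt / IZR qt)) with (IZR pt) by (field; lra). lra.
    + rewrite Im_sym. simpl Im. rewrite !mult_IZR, opp_IZR, im_a1. field. lra.
Qed.

Lemma line0_R r : line_l a2 q 0 (RtoC r).
Proof. unfold line_l. simpl. pose proof qpos. field. lra. Qed.

Lemma N2_rat_fwd pt qt r : (0 < qt)%Z ->
  IZR q * Re a1 - IZR p * Re a2 = IZR pt / IZR qt -> N2 a1 a2 r -> exists n, r = IZR n / IZR qt.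
Proof.
  intros Hqt Hth HN. assert (Hqt' : 0 < IZR qt) by (apply IZR_lt; auto). pose proof qpos.
  apply NNPP; intro Hn. apply HN.
  set (d := IZR qt * r).
  assert (Hd : forall n : Z, d <> IZR n).
  { intros n E. apply Hn. exists n. rewrite <- E. unfold d. field. lra. }
  destruct (dist_nonint d Hd) as [delta [Hdp Hdl]].
  apply (GH_suff a1 a2 (RtoC r) (Rmin (Rabs (Im a2) / IZR q) (delta / IZR qt)) 0 0).
  - apply Rmin_pos. apply absq_pos. apply Rdiv_lt_0_compat; auto.
  - intros [[t x] y] _. simpl pow. rewrite Rmult_1_r.
    destruct (Z.eq_dec (p * x + q * y - 0) 0) as [E|E].
    + eapply Rle_trans; [apply Rmin_r|]. eapply Rle_trans; [|apply re_le_Cmod].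
      assert (Hdv : (q | x)%Z).
      { apply (Z.gauss q p x). exists (- y)%Z. nia. rewrite Z.gcd_comm; auto. }
      destruct Hdv as [j Hj]. subst x.
      assert (Hy : (q * (y + p * j) = 0)%Z) by nia.
      apply Z.mul_eq_0 in Hy. destruct Hy as [Hy|Hy]; [lia|].
      assert (y = - p * j)%Z by lia. subst y.
      rewrite Re_sym. simpl Re. rewrite !mult_IZR, opp_IZR.
      replace (IZR t + Re a1 * (IZR j * IZR q) + Re a2 * (- IZR p * IZR j) - r)
        with ((IZR (qt * t + pt * j) - d) / IZR qt).
      2:{ unfold d. rewrite plus_IZR, !mult_IZR.
          replace (IZR pt) with (IZR qt * (IZR q * Re a1 - IZR p * Re a2)) by (rewrite Hth; field; lra).
          field. lra. }
      unfold Rdiv. rewrite Rabs_mult, (Rabs_inv (IZR qt)), (Rabs_right (IZR qt)) by lra.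
      apply Rmult_le_compat_r. left; apply Rinv_0_lt_compat; auto. apply Hdl.
    + eapply Rle_trans; [apply Rmin_l|]. apply (Im_big _ t x y 0); auto. apply line0_R.
Qed.

Lemma M2_line_rat pt qt lam m : (0 < qt)%Z ->
  IZR q * Re a1 - IZR p * Re a2 = IZR pt / IZR qt -> M2 a1 a2 lam -> line_l a2 q m lam ->
  exists n, IZR q * IZR qt * Re lam - IZR qt * IZR m * Re a2 = IZR n.
Proof.
  intros Hqt Hth HN Hl. assert (Hqt' : 0 < IZR qt) by (apply IZR_lt; auto). pose proof qpos.
  apply NNPP; intro Hn. apply HN.
  set (d := IZR q * IZR qt * Re lam - IZR qt * IZR m * Re a2).
  assert (Hd : forall n : Z, d <> IZR n).
  { intros n E. apply Hn. exists n. exact E. }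
  destruct (dist_nonint d Hd) as [delta [Hdp Hdl]].
  apply (GH_suff a1 a2 lam (Rmin (Rabs (Im a2) / IZR q) (delta / (IZR q * IZR qt))) 0 0).
  - apply Rmin_pos. apply absq_pos. apply Rdiv_lt_0_compat; auto. apply Rmult_lt_0_compat; auto.
  - intros [[t x] y] _. simpl pow. rewrite Rmult_1_r.
    destruct (Z.eq_dec (p * x + q * y - m) 0) as [E|E].
    + eapply Rle_trans; [apply Rmin_r|]. eapply Rle_trans; [|apply re_le_Cmod].
      assert (Hy : IZR q * IZR y = IZR m - IZR p * IZR x).
      { rewrite <- !mult_IZR, <- minus_IZR. f_equal. lia. }
      rewrite Re_sym.
      replace (IZR t + Re a1 * IZR x + Re a2 * IZR y - Re lam)
        with ((IZR (q * qt * t + pt * x) - d) / (IZR q * IZR qt)).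
      2:{ unfold d. rewrite plus_IZR, !mult_IZR.
          replace (IZR pt) with (IZR qt * (IZR q * Re a1 - IZR p * Re a2)) by (rewrite Hth; field; lra).
          replace (IZR y) with ((IZR m - IZR p * IZR x) / IZR q) by (rewrite <- Hy; field; lra).
          field. lra. }
      unfold Rdiv. rewrite Rabs_mult, (Rabs_inv (IZR q * IZR qt)), (Rabs_right (IZR q * IZR qt)).
      2:{ left; apply Rmult_lt_0_compat; auto. }
      apply Rmult_le_compat_r. left; apply Rinv_0_lt_compat; apply Rmult_lt_0_compat; auto. apply Hdl.
    + eapply Rle_trans; [apply Rmin_l|]. apply (Im_big _ t x y m); auto.
Qed.

Lemma key_dense (Hirr : forall a b : Z, b <> 0%Z -> IZR q * Re a1 - IZR p * Re a2 <> IZR a / IZR b)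
  m z0 : line_l a2 q m z0 -> forall X eps M, 0 < eps ->
  exists k, M < knorm k /\ Im (symbolL2 a1 a2 z0 k) = 0 /\ Rabs (Re (symbolL2 a1 a2 z0 k) - X) < eps.
Proof.
  intros Hl X eps M Heps. pose proof qpos.
  destruct (Z.gcd_bezout _ _ _ Hg) as [u [v Huv]].
  set (th := IZR q * Re a1 - IZR p * Re a2) in *.
  set (C0 := Re a1 * IZR (m * u) + Re a2 * IZR (m * v) - Re z0).
  destruct (irr_dense th Hirr (X - C0) eps (Rabs M + Rabs (IZR (m * u))) Heps) as [t [j [Hj Hd]]].
  exists (t, (m * u + q * j)%Z, (m * v - p * j)%Z). split; [|split].
  - eapply Rle_lt_trans; [|apply knorm_gt_x].
    rewrite plus_IZR. pose proof (Rabs_triang (IZR (m * u) + IZR (q * j)) (- IZR (m * u))) as T.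
    replace (IZR (m * u) + IZR (q * j) + - IZR (m * u)) with (IZR (q * j)) in T by ring.
    rewrite Rabs_Ropp in T. rewrite (mult_IZR q j), Rabs_mult, (Rabs_right (IZR q)) in T by lra.
    assert (1 <= IZR q) by (apply IZR_le; lia).
    assert (Rabs (IZR j) <= IZR q * Rabs (IZR j)).
    { rewrite <- (Rmult_1_l (Rabs (IZR j))) at 1. apply Rmult_le_compat_r; auto. apply Rabs_pos. }
    pose proof (Rle_abs M). rewrite (mult_IZR q j). lra.
  - rewrite Im_sym. unfold line_l in Hl. rewrite Hl, im_a1.
    apply (f_equal IZR) in Huv. rewrite plus_IZR, !mult_IZR in Huv.
    rewrite minus_IZR, plus_IZR, !mult_IZR.
    transitivity (Im a2 / IZR q * IZR m * (IZR u * IZR p + IZR v * IZR q - 1)).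
    + field. lra.
    + rewrite Huv. ring.
  - rewrite Re_sym. unfold gz in Hd.
    replace (IZR t + Re a1 * IZR (m * u + q * j) + Re a2 * IZR (m * v - p * j) - Re z0 - X)
      with (IZR t + IZR j * th - (X - C0)); auto.
    unfold C0, th. rewrite minus_IZR, plus_IZR, !mult_IZR. ring.
Qed.

Definition W (z0 : C) (n : nat) (s : R) : Prop := U a1 a2 n (z0 + RtoC s)%C.

Lemma shift_eq (z0 : C) (y s : R) : ((z0 + RtoC y) - (z0 + RtoC s))%C = RtoC (y - s).
Proof. destruct z0. apply C_eq; simpl; ring. Qed.

Lemma W_open z0 n : R_open (W z0 n).
Proof.
  intros s Hs. destruct (U_open a1 a2 n _ Hs) as [e [He H]]. exists e. split; auto.
  intros y Hy. apply H. rewrite shift_eq, Cmod_R. auto.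
Qed.

Lemma W_dense (Hirr : forall a b : Z, b <> 0%Z -> IZR q * Re a1 - IZR p * Re a2 <> IZR a / IZR b)
  m z0 n : line_l a2 q m z0 -> R_dense (W z0 n).
Proof.
  intros Hl X e He.
  destruct (key_dense Hirr m z0 Hl X e (INR n) He) as [k [Hk [HIm HRe]]].
  exists (Re (symbolL2 a1 a2 z0 k)). split; auto.
  exists k. split; auto.
  rewrite (sym_shift a1 a2 z0), (Cmod_zero_of (_ - _)%C). rewrite Rmult_0_l; lra.
  - destruct z0. destruct (symbolL2 a1 a2 (r, r0) k). simpl in *. ring.
  - destruct z0. destruct (symbolL2 a1 a2 (r, r0) k). simpl in *. rewrite HIm. ring.
Qed.

Lemma M2_W0 s : M2 a1 a2 (RtoC s) <-> forall n, W (RtoC 0) n s.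
Proof.
  unfold W. replace (RtoC 0 + RtoC s)%C with (RtoC s) by (apply C_eq; simpl; ring).
  apply M2_iff.
Qed.

End Main.

Theorem proposition2p9 (a1 a2 : C) (p q : Z) :
  Im a1 <> 0 -> Im a2 <> 0 ->
  p <> 0%Z -> (0 < q)%Z -> Z.gcd p q = 1%Z ->
  Im a1 / Im a2 = IZR p / IZR q ->
  (forall lam, M2 a1 a2 lam -> exists m : Z, line_l a2 q m lam) /\
  (forall pt qt : Z, (0 < qt)%Z -> Z.gcd pt qt = 1%Z ->
     IZR q * Re a1 - IZR p * Re a2 = IZR pt / IZR qt ->
     (forall r, N2 a1 a2 r <-> exists n : Z, r = IZR n / IZR qt) /\
     (forall m : Z, discrete_in (line_l a2 q m) (M2 a1 a2) /\
                    countable_in (line_l a2 q m) (M2 a1 a2))) /\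
  ((forall a b : Z, b <> 0%Z -> IZR q * Re a1 - IZR p * Re a2 <> IZR a / IZR b) ->
     (R_dense (N2 a1 a2) /\ R_Gdelta (N2 a1 a2)) /\
     (forall m : Z, dense_in (line_l a2 q m) (M2 a1 a2) /\
                    Gdelta_in (line_l a2 q m) (M2 a1 a2))).
Proof.
  intros Ha1 Ha2 Hp Hq Hg Hr. assert (Hq' : 0 < IZR q) by (apply IZR_lt; auto). split; [|split].
  - intros lam. eapply (part1 a1 a2 p q); eauto.
  - intros pt qt Hqt Hgt Hth. split.
    + intros r. split.
      * eapply (N2_rat_fwd a1 a2 p q); eauto.
      * intros [n ->]. eapply (N2_rat_back a1 a2 p q); eauto.
    + intros m.
      assert (Hqt' : 0 < IZR qt) by (apply IZR_lt; auto).
      apply (disc_count _ _ (IZR q * IZR qt) (IZR qt * IZR m * Re a2) (IZR m * Im a2 / IZR q)).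
      * apply Rmult_lt_0_compat; auto.
      * intros z Hz. exact Hz.
      * intros z Lz Sz. eapply (M2_line_rat a1 a2 p q); eauto.
  - intros Hirr. split; [split|].
    + intros X e He.
      assert (Hl0 : line_l a2 q 0 (RtoC 0)) by (unfold line_l; simpl; field; lra).
      destruct (baire (W a1 a2 (RtoC 0)) (W_open a1 a2 (RtoC 0))
        (fun n => ltac:(eapply (W_dense a1 a2 p q); eauto)) X e He) as [s [Hs Hse]].
      exists s. split; auto. apply M2_W0. auto.
    + exists (W a1 a2 (RtoC 0)). split. apply W_open. intros s. apply M2_W0.
    + intros m. split.
      * intros z e Lz He.
        set (z0 := (0, Im z) : C).
        assert (Lz0 : line_l a2 q m z0) by exact Lz.
        destruct (baire (W a1 a2 z0) (W_open a1 a2 z0)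
          (fun n => ltac:(eapply (W_dense a1 a2 p q); eauto)) (Re z) e He) as [s [Hs Hse]].
        exists (z0 + RtoC s)%C. split; [|split].
        -- unfold line_l. simpl. rewrite Rplus_0_r. exact Lz.
        -- apply M2_iff. exact Hs.
        -- replace ((z0 + RtoC s) - z)%C with (RtoC (s - Re z)).
           rewrite Cmod_R; auto. destruct z. apply C_eq; simpl; ring.
      * exists (U a1 a2). split. apply U_open. intros z _. apply M2_iff.
Qed.
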